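(* Let $K$ be a perfect field, let $K\subseteq L\subseteq M$ be finite extensions inside $\bar K$, and let $J/K$ be a finite extension with $\tilde M\cap\tilde J=K$. Then $[LJ:K]=[L:K][J:K]$, $t_K(LJ)=t_K(L)\,t_K(J)$, $\rho_K(MJ,LJ)=r_K(J)\,\rho_K(M,L)$, and $\tau_K(MJ,LJ)=[J:K]\,\tau_K(M,L)$.
   Context: $\bar K$ is a fixed algebraic closure; $\tilde E$ is the Galois closure in $\bar K$ of $E/K$. For $E/K$ with $G=\mathrm{Gal}(\tilde E/K)$, $H=\mathrm{Gal}(\tilde E/E)$: the cluster size is $r_K(E)=[N_G(H):H]$ and the ascending index is $t_K(E)=[G:H^G]$ with $H^G$ the normal closure of $H$ in $G$. For finite $L/K$, $M/K$: writing $L=K(\alpha)$ with minimal polynomial $f$, $\rho_K(M,L)$ is the number of roots of $f$ in $M$; if $L_1,\dots,L_a$ are all the distinct subfields of $M$ isomorphic to $L$ over $K$, then $\tau_K(M,L)=[L_1\cap\cdots\cap L_a:K]$ if $a\ge1$ and $0$ if $a=0$. *)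

(* Defs.v *)
From HB Require Import structures.
From mathcomp Require Import all_boot all_order all_algebra all_fingroup all_solvable all_field.
From Stdlib Require Import ClassicalEpsilon.
Set Implicit Arguments. Unset Strict Implicit. Unset Printing Implicit Defensive.
Import GRing.Theory.
Local Open Scope ring_scope.

Definition perfect_field (F : fieldType) : Prop :=
  [pchar F] =i pred0 \/
  (forall p, p \in [pchar F] -> forall x : F, exists y : F, y ^+ p = x).

Section Defs.
Variables (F : fieldType) (Om : splittingFieldType F).
(* K is the base field F, i.e. the subfield 1 of Om; Om is a finite normal
   extension of K playing the role of (a large enough part of) \bar K. *)

Definition galClosure (E : {vspace Om}) : {aspace Om} :=
  agenv_aspace (\sum_(s in ('Gal({:Om} / 1%VS))%g) (s @: E))%VS.

(* cluster size r_K(E) = [N_G(H) : H] *)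
Definition clusterSize (E : {vspace Om}) : nat :=
  (#|'N_('Gal(galClosure E / 1%VS))('Gal(galClosure E / E)) : 'Gal(galClosure E / E)|)%g.

(* ascending index t_K(E) = [G : H^G], H^G the normal closure of H in G *)
Definition ascIndex (E : {vspace Om}) : nat :=
  (#|'Gal(galClosure E / 1%VS) :
     << class_support 'Gal(galClosure E / E) 'Gal(galClosure E / 1%VS) >>|)%g.

Definition primElt (L : {vspace Om}) : Om :=
  epsilon (inhabits 0) (fun a : Om => <<1%VS; a>>%VS = L).

Definition nrootsIn (M : {vspace Om}) (p : {poly Om}) : nat :=
  epsilon (inhabits 0%N) (fun n => exists rs : seq Om,
    [/\ uniq rs, size rs = n & forall x, (x \in rs) = (x \in M) && root p x]).

Definition rhoK (M L : {vspace Om}) : nat :=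
  nrootsIn M (minPoly 1%VS (primElt L)).

Definition isoK (L L' : {vspace Om}) : Prop :=
  exists f : 'End(Om), kHom 1%VS L f /\ (f @: L)%VS = L'.

Definition conjIn (M L L' : {vspace Om}) : Prop :=
  is_aspace L' /\ (L' <= M)%VS /\ isoK L L'.

Definition tauK (M L : {vspace Om}) : nat :=
  epsilon (inhabits 0%N) (fun n =>
    ((forall L', ~ conjIn M L L') /\ n = 0%N) \/
    ((exists L', conjIn M L L') /\
     exists D : {vspace Om},
       (forall x, x \in D <-> (forall L', conjIn M L L' -> x \in L')) /\
       n = \dim D)).
End Defs.

(* Main.v *)
Require Import Defs.
From HB Require Import structures.
From mathcomp Require Import all_boot all_order all_algebra all_fingroup all_solvable all_field.
From mathcomp Require Import ring zify.
From Stdlib Require Import ClassicalEpsilon.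
Set Implicit Arguments. Unset Strict Implicit. Unset Printing Implicit Defensive.

Section GroupPart.
Local Open Scope group_scope.
Variable gT : finGroupType.
Variables (G A B : {group gT}).
Hypotheses (nsAG : A <| G) (nsBG : B <| G) (eAB : A * B = G).

Lemma sAG : A \subset G. Proof. by case/andP: nsAG. Qed.
Lemma sBG : B \subset G. Proof. by case/andP: nsBG. Qed.

Lemma GL1 (X Y : {group gT}) : A \subset X -> B \subset Y -> X \subset G -> Y \subset G ->
  #|G : X :&: Y| = (#|G : X| * #|G : Y|)%N.
Proof.
move=> sAX sBY sXG sYG.
have eXY : X * Y = G.
  apply/eqP; rewrite eqEsubset mul_subG //= -{1}eAB mulgSS //.
have hm := mul_cardG X Y; rewrite eXY in hm.
have l1 := Lagrange sXG; have l2 := Lagrange sYG.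
have l3 := Lagrange (subset_trans (subsetIl X Y) sXG).
apply/eqP; rewrite -(eqn_pmul2l (cardG_gt0 X)) -(eqn_pmul2l (cardG_gt0 Y)).
rewrite mulnA [(#|Y| * #|X|)%N]mulnC hm -mulnA l3.
apply/eqP; by rewrite -{1}l1 -l2 mulnACA [in RHS]mulnA (mulnC #|Y|).
Qed.


Definition ncl (Z : {set gT}) := <<class_support Z G>>.

Lemma ncl_normal (Z : {set gT}) : Z \subset G -> ncl Z <| G.
Proof.
move=> sZG; rewrite /normal gen_subG class_support_subG //=.
by rewrite norms_gen // class_support_norm.
Qed.

Lemma ncl_sub (Z : {set gT}) : Z \subset ncl Z.
Proof. exact: subset_trans (sub_class_support _ _) (subset_gen _). Qed.

Lemma ncl_min (Z : {set gT}) (N : {group gT}) : N <| G -> Z \subset N -> ncl Z \subset N.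
Proof.
case/andP=> _ nNG sZN; rewrite gen_subG class_support_sub_norm //.
Qed.

Lemma ncl_S (Z1 Z2 : {set gT}) : Z2 \subset G -> Z1 \subset Z2 -> ncl Z1 \subset ncl Z2.
Proof.
move=> sZ2G s12; apply: ncl_min; first exact: ncl_normal.
exact: subset_trans s12 (ncl_sub _).
Qed.

Lemma Dedekind_l (X : {group gT}) : A \subset X -> X \subset G -> A * (X :&: B) = X.
Proof. by move=> sAX sXG; rewrite setIC group_modl // eAB (setIidPr sXG). Qed.

Lemma Dedekind_r (Y : {group gT}) : B \subset Y -> Y \subset G -> B * (Y :&: A) = Y.
Proof.
move=> sBY sYG; rewrite setIC group_modl //.
have -> : B * A = G by rewrite (normC (subset_trans sBG (normal_norm nsAG))) eAB.
by rewrite (setIidPr sYG).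
Qed.

Lemma GT (X Y : {group gT}) : A \subset X -> B \subset Y -> X \subset G -> Y \subset G ->
  ncl (X :&: Y) = ncl X :&: ncl Y.
Proof.
move=> sAX sBY sXG sYG.
have sXYG : X :&: Y \subset G by rewrite subIset ?sXG.
apply/eqP; rewrite eqEsubset subsetI !ncl_S ?subsetIl ?subsetIr //=.
set P := ncl (X :&: Y).
have sP1 : ncl (X :&: B) \subset P.
  by apply: ncl_S => //; rewrite setIS.
have sP2 : ncl (Y :&: A) \subset P.
  by apply: ncl_S => //; rewrite setIC setSI.
have sP1B : ncl (X :&: B) \subset B by apply: ncl_min => //; rewrite subsetIr.
have sP2A : ncl (Y :&: A) \subset A by apply: ncl_min => //; rewrite subsetIr.
have nP1 := ncl_normal (subset_trans (subsetIl X B) sXG).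
have nP2 := ncl_normal (subset_trans (subsetIl Y A) sYG).
have hX : ncl X \subset A * ncl (X :&: B).
  have e : A <*> ncl (X :&: B) = A * ncl (X :&: B).
    by apply: norm_joinEr; case/andP: nsAG => _ nA; exact: subset_trans (subset_trans sP1B sBG) nA.
  rewrite -e; apply: ncl_min; first exact: normalY.
  by rewrite /= e -{1}(Dedekind_l sAX sXG) mulgS // ncl_sub.
have hY : ncl Y \subset B * ncl (Y :&: A).
  have e : B <*> ncl (Y :&: A) = B * ncl (Y :&: A).
    by apply: norm_joinEr; case/andP: nsBG => _ nA; exact: subset_trans (subset_trans sP2A sAG) nA.
  rewrite -e; apply: ncl_min; first exact: normalY.
  by rewrite /= e -{1}(Dedekind_r sBY sYG) mulgS // ncl_sub.
apply/subsetP=> g /setIP[/(subsetP hX)/mulsgP[a y Aa Py ->] /(subsetP hY)/mulsgP[b z Bb Pz e]].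
have Az : z \in A := subsetP sP2A z Pz.
have By : y \in B := subsetP sP1B y Py.
have Gz : z \in G := subsetP sAG z Az.
have eq1 : z^-1 * a = b ^ z * y^-1.
  by rewrite /conjg -e mulgA mulgK.
have ABza : z^-1 * a \in A :&: B.
  rewrite inE groupM ?groupV //= eq1 groupM ?groupV //.
  by rewrite memJ_norm // (subsetP (normal_norm nsBG)).
have Pza : z^-1 * a \in P.
  apply: (subsetP sP2); apply: (subsetP (ncl_sub _)).
  by move: ABza; rewrite !inE => /andP[-> /(subsetP sBY) ->].
have -> : a * y = z * (z^-1 * a) * y by rewrite mulgA mulgV mul1g.
apply: groupM; first apply: groupM => //.
- exact: (subsetP sP2).
- exact: (subsetP sP1).
Qed.


Lemma rcosetIN (N : {group gT}) (b : gT) : b \in N -> (A :* b) :&: N = (A :&: N) :* b.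
Proof.
move=> Nb; apply/setP=> x; rewrite inE !mem_rcoset inE.
by rewrite (groupMr _ (groupVr Nb)) andbC.
Qed.

Lemma rcosets_partition_mulS (T : {set gT}) (H : {group gT}) : partition (rcosets H T) (H * T).
Proof.
set HG := H * T; have sGHG: {subset T <= HG} by apply/subsetP/mulG_subr.
have defHx x: x \in HG -> [set y in HG | rcoset H x == rcoset H y] = H :* x.
  move=> HGx; apply/setP=> y; rewrite inE !rcosetE (sameP eqP rcoset_eqP).
  by rewrite rcoset_sym; apply/andb_idl/subsetP; rewrite mulGS sub1set.
have:= preim_partitionP (rcoset H) HG; congr (partition _ _); apply/setP=> Hx.
apply/imsetP/idP=> [[x HGx ->] | ]; first by rewrite defHx // mem_rcosets.
by case/rcosetsP=> x /sGHG-HGx ->; exists x; rewrite ?defHx.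
Qed.

Lemma KK (T : {set gT}) (N : {group gT}) :
  T \subset G -> A * T = T -> B \subset N ->
  (#|T :&: N| * #|A| = #|T| * #|A :&: N|)%N.
Proof.
move=> sTG AT sBN.
have pP : partition (rcosets A T) T by rewrite -{2}AT; apply: rcosets_partition_mulS.
have cT : #|T| = (#|rcosets A T| * #|A|)%N.
  apply: card_uniform_partition pP => C /rcosetsP[g _ ->]; exact: card_rcoset.
have cTN : #|T :&: N| = (#|rcosets A T| * #|A :&: N|)%N.
  rewrite -sum1_card.
  rewrite (eq_bigl (fun x => (x \in T) && (x \in N))); last by move=> x; rewrite inE.
  set P := rcosets A T in pP *.
  rewrite big_mkcondr -(cover_partition pP) big_trivIset; last by case/and3P: pP.
  rewrite -sum_nat_const; apply: eq_bigr => C /rcosetsP[g Tg ->].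
  have : g \in A * B by rewrite eAB (subsetP sTG).
  case/mulsgP=> a b Aa Bb ->.
  rewrite rcosetM (rcoset_id Aa) -(card_rcoset _ b) -rcosetIN ?(subsetP sBN) //.
  rewrite -big_mkcondr sum1_card.
  by apply: eq_card => x; rewrite !inE.
by rewrite cT cTN mulnAC.
Qed.

Lemma GR (X N : {group gT}) (S : {set gT}) :
  A \subset X -> X \subset G -> S \subset G ->
  (forall h g, h \in X -> g \in S -> h * g \in S) ->
  B \subset N -> N \subset G ->
  (#|S :&: N| * #|G| = #|S| * #|N|)%N.
Proof.
move=> sAX sXG sSG hS sBN sNG.
have AS : A * S = S.
  apply/eqP; rewrite eqEsubset mulg_subr ?group1 // andbT.
  by apply/subsetP=> x /mulsgP[a g Aa Sg ->]; apply: hS => //; apply: (subsetP sAX).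
have h1 := KK sSG AS sBN.
have h2 := KK (subxx G) (mulSGid sAG) sBN.
rewrite (setIidPr sNG) in h2.
have p1 : (0 < #|A|)%N := cardG_gt0 A.
have p2 : (0 < #|A :&: N|)%N := cardG_gt0 (A :&: N)%G.
apply/eqP; rewrite -(eqn_pmul2r p1) -(eqn_pmul2r p2).
apply/eqP.
transitivity ((#|S :&: N| * #|A|) * (#|G| * #|A :&: N|))%N; first ring.
rewrite h1 -h2; ring.
Qed.

Lemma GTau (X Y : {group gT}) (S : {set gT}) :
  A \subset X -> X \subset G -> B \subset Y -> Y \subset G -> S \subset G ->
  (forall h g, h \in X -> g \in S -> h * g \in S) ->
  <<\bigcup_(g in S :&: 'N_G(Y)) (X :&: Y) :^ g>> =
  <<\bigcup_(g in S) X :^ g>> :&: Y.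
Proof.
move=> sAX sXG sBY sYG sSG hS.
set Q' := <<_>>; set Q := <<_>>.
have nAG := normal_norm nsAG.
have sQ'Y : Q' \subset Y.
  rewrite gen_subG; apply/bigcupsP=> g /setIP[_ /setIP[_ nYg]].
  by rewrite conjIg (normP nYg) subsetIr.
apply/eqP; rewrite eqEsubset; apply/andP; split.
  rewrite subsetI sQ'Y andbT gen_subG; apply/bigcupsP=> g /setIP[Sg _].
  apply: subset_trans (subset_gen _); apply: subset_trans (bigcup_sup g Sg).
  by rewrite conjIg subsetIl.
have [S0|[g0 Sg0]] := set_0Vmem S.
  by rewrite /Q S0 big_set0 gen0; apply/subsetP=> x; rewrite inE => /andP[/set1P -> _].
have decomp g : g \in S -> exists2 b, b \in S :&: B & X :^ g = X :^ b.
  move=> Sg; have : g \in A * B by rewrite eAB (subsetP sSG).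
  case/mulsgP=> a b Aa Bb Dg; exists b.
    rewrite inE Bb andbT.
    have -> : b = a^-1 * g by rewrite Dg mulKg.
    by apply: hS => //; rewrite groupV (subsetP sAX).
  by rewrite Dg conjsgM conjGid // (subsetP sAX).
have inSN b : b \in S :&: B -> b \in S :&: 'N_G(Y).
  case/setIP=> Sb Bb; rewrite inE Sb inE (subsetP sBG) //=.
  by apply: (subsetP (normG Y)); apply: (subsetP sBY).
have [b0 SBb0 _] := decomp g0 Sg0.
have Bb0 : b0 \in B by case/setIP: SBb0.
have sAYQ' : Y :&: A \subset Q'.
  apply: subset_trans (subset_gen _); apply: subset_trans (bigcup_sup b0 (inSN _ SBb0)).
  have nAb0 : b0 \in 'N(A) := subsetP nAG b0 (subsetP sBG b0 Bb0).
  have nYb0 : b0 \in 'N(Y) := subsetP (normG Y) b0 (subsetP sBY b0 Bb0).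
  by rewrite conjIg (normP nYb0) setIC -{1}(normP nAb0) setSI // conjSg.
have nQ'A : Q' \subset 'N(A).
  apply: subset_trans nAG; exact: subset_trans sQ'Y sYG.
have eAQ' : A <*> Q' = A * Q' := norm_joinEr nQ'A.
have sQAQ' : Q \subset A * Q'.
  rewrite -eAQ' gen_subG; apply/bigcupsP=> g Sg.
  have [b SBb ->] := decomp g Sg.
  have Bb : b \in B by case/setIP: SBb.
  have Gb : b \in G := subsetP sBG b Bb.
  have nYb : b \in 'N(Y) := subsetP (normG Y) b (subsetP sBY b Bb).
  have sAXb : A \subset X :^ b by rewrite -(normP (subsetP nAG b Gb)) conjSg.
  have sXbG : X :^ b \subset G by rewrite -(normP (subsetP (normG G) b Gb)) conjSg.
  rewrite /= eAQ' -(Dedekind_l (X := (X :^ b)%G) sAXb sXbG) mulgS //.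
  apply: subset_trans (subset_gen _); apply: subset_trans (bigcup_sup b (inSN _ SBb)).
  by rewrite conjIg (normP nYb) setIS.
apply: subset_trans (setSI Y sQAQ') _.
rewrite setIC -group_modr //.
by rewrite mul_subG.
Qed.

Definition Sg (Z X : {set gT}) := [set g in G | Z \subset X :^ g].

Lemma Sg_mul (Z X : {group gT}) h g : X \subset G -> h \in X -> g \in Sg Z X -> h * g \in Sg Z X.
Proof.
move=> sXG Xh; rewrite !inE => /andP[Gg sZ]; rewrite conjsgM conjGid // sZ andbT.
by rewrite groupM // (subsetP sXG).
Qed.

Lemma Sg_sub (Z X : {set gT}) : Sg Z X \subset G.
Proof. by apply/subsetP=> g; rewrite inE => /andP[]. Qed.

Lemma Sg_I (Z X Y : {group gT}) : A \subset Z -> Z \subset G -> A \subset X ->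
  B \subset Y -> Y \subset G ->
  Sg (Z :&: Y) (X :&: Y) = Sg Z X :&: 'N_G(Y).
Proof.
move=> sAZ sZG sAX sBY sYG; apply/setP=> g.
apply/idP/idP.
  rewrite inE => /andP[Gg].
  have nAg : g \in 'N(A) := subsetP (normal_norm nsAG) g Gg.
  have nBg : g \in 'N(B) := subsetP (normal_norm nsBG) g Gg.
  rewrite conjIg subsetI => /andP[sZYX sZYY].
  have sZ : Z \subset X :^ g.
    suff : A * (Z :&: B) \subset X :^ g by rewrite Dedekind_l.
    rewrite mul_subG //.
      by rewrite -(normP nAg) conjSg.
    by apply: subset_trans sZYX; rewrite setIS.
  have sYYg : Y \subset Y :^ g.
    suff : B * (Y :&: A) \subset Y :^ g by rewrite Dedekind_r.
    rewrite mul_subG //.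
      by rewrite -(normP nBg) conjSg.
    by apply: subset_trans sZYY; rewrite setIC setSI.
  have eY : Y :^ g = Y.
    by apply/eqP; rewrite eq_sym eqEcard sYYg cardJg leqnn.
  rewrite inE [g \in Sg _ _]inE Gg sZ !inE Gg /=.
  by rewrite eY.
rewrite !inE => /andP[/andP[Gg sZX] /andP[_ nYg]].
have eY : Y :^ g = Y by apply/eqP; rewrite eqEcard nYg cardJg leqnn.
by rewrite Gg conjIg eY setSI.
Qed.

End GroupPart.

Import GRing.Theory.
Local Open Scope ring_scope.

Lemma perfect_sep (F : fieldType) (Om : splittingFieldType F) :
  perfect_field F -> separable 1 {:Om}.
Proof.
move=> pF; apply/separableP => x _.
apply/negP => /negP /separablePn_pchar [p pchOm [g g1 Dm]].
have pchF : p \in [pchar F] by rewrite -(pchar_lalg Om).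
case: pF => [ch0 | frob]; first by move: (ch0 p); rewrite pchF.
have pr_p := pcharf_prime pchOm.
have hd : forall i : 'I_(size g), exists d : Om, d \in 1%VS /\ d ^+ p = g`_i.
  move=> i; have : g`_i \in 1%VS by apply: (polyOverP g1).
  case/vlineP=> c ->; have [e <-] := frob p pchF c.
  exists (e%:A); split; first by rewrite rpredZ // memv_line.
  by rewrite -!in_algE rmorphXn.
have [d Hd] := fin_all_exists hd.
pose h := \sum_(i < size g) (d i)%:P * 'X^i.
have h1 : h \is a polyOver 1%VS.
  apply: rpred_sum => i _; apply: rpredM; last exact: rpredX (polyOverX _).
  by rewrite polyOverC; case: (Hd i).
have pchP : p \in [pchar {poly Om}] := rmorph_pchar polyC pchOm.
have hp : h ^+ p = g \Po 'X^p.
  rewrite -(pFrobenius_autE pchP) rmorph_sum comp_polyE.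
  apply: eq_bigr => i _ /=; rewrite rmorphM /= !pFrobenius_autE -polyC_exp.
  by case: (Hd i) => _ ->; rewrite -exprM mulnC exprM mul_polyC.
have mP : minPoly 1 x = h ^+ p by rewrite Dm hp.
have p_gt1 := prime_gt1 pr_p.
have p0 : (p == 0)%N = false by rewrite eqn0Ngt ltnW.
have hn0 : h != 0.
  apply/eqP=> h0; have := monic_neq0 (monic_minPoly 1 x).
  by rewrite mP h0 expr0n p0 eqxx.
have rh : root h x.
  have := root_minPoly 1 x; rewrite mP /root horner_exp expf_eq0.
  by case/andP.
have le1 := dvdp_leq hn0 (minPoly_dvdp h1 rh).
have sz := size_exp h p; rewrite -mP size_minPoly /= in sz.
rewrite size_minPoly in le1.
have s2 := root_size_gt1 hn0 rh.
move: sz le1 s2; set s := size h; set m := adjoin_degree _ _ => sz le1 s2.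
have : (s.-1 * 2 <= s.-1 * p)%N by rewrite leq_mul2l p_gt1 orbT.
lia.
Qed.

Section FieldPart.
Variables (F : fieldType) (Om : splittingFieldType F).
Hypothesis sepOm : separable 1 {:Om}.
Local Notation gT := (gal_of (fullv : {vspace Om})).
Local Notation HG V := (galoisG (fullv : {vspace Om}) V).
Local Notation GG := (galoisG (fullv : {vspace Om}) 1%VS).

Lemma galOm (K : {subfield Om}) : galois K {:Om}.
Proof. by rewrite /galois subvf (separableSl (sub1v K) sepOm) normalFieldf. Qed.

Lemma memHG (V : {subfield Om}) (x : gT) : (x \in HG V) = (V <= fixedSpace x)%VS.
Proof. have := @gal_kHom F Om V {:Om}%AS x (subvf V). move=> ->. rewrite /kHom.
have := k1AHom fullv (gal_repr x). rewrite /kHom => /andP[-> _]. by [].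
Qed.

Lemma HG_all (x : gT) : x \in GG.
Proof. have := @gal_kHom F Om 1%AS {:Om}%AS x (subvf 1). move=> ->. exact: k1AHom. Qed.

Lemma fixedF (E : {subfield Om}) : fixedField (HG E) = E.
Proof. exact: (galois_fixedField (galOm E)). Qed.

Lemma galconn (E K : {subfield Om}) : (E <= K)%VS = (HG K \subset HG E).
Proof.
apply/idP/idP; first exact: galS.
by move/fixedFieldS; rewrite !fixedF.
Qed.

Lemma dimHG (E : {subfield Om}) : \dim E = #|GG : HG E|%g.
Proof.
have := dim_fixed_galois (galOm 1%AS) (galS {:Om}%AS (sub1v E)).
by rewrite fixedF dimv1 divn1.
Qed.

Lemma HG_prod (E K : {subfield Om}) : HG (E * K)%AS = (HG E :&: HG K)%g.
Proof.
apply/eqP; rewrite eqEsubset subsetI !galS ?field_subvMr ?field_subvMl //=.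
set Hh := (HG E :&: HG K)%G.
have <- : 'Gal({:Om} / fixedField Hh)%g = Hh by apply: gal_fixedField.
apply: galS; apply: prodv_sub.
  by rewrite -{1}(fixedF E) fixedFieldS // subsetIl.
by rewrite -{1}(fixedF K) fixedFieldS // subsetIr.
Qed.

Lemma HG_conj (E : {subfield Om}) (s : gT) : HG (s @: E)%VS = (HG E :^ s)%g.
Proof. by rewrite (gal_conjg E s). Qed.

Lemma HG_gc (E : {subfield Om}) : HG (galClosure E) = gcore (HG E) GG.
Proof.
apply/eqP; rewrite eqEsubset; apply/andP; split.
  apply/bigcapsP=> s _; rewrite -HG_conj; apply: galS.
  rewrite /galClosure /=; apply: subv_trans (sub_agenv _).
  by apply: (sumv_sup s) => //; apply: HG_all.
set Hh := gcore (HG E) GG.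
have <- : 'Gal({:Om} / fixedField Hh)%g = Hh by apply: gal_fixedField.
apply: galS; rewrite /galClosure /=.
have sW : (\sum_(s in GG) (s @: E) <= fixedField Hh)%VS.
  apply/subv_sumP=> s _.
  rewrite -[X in (X <= _)%VS](fixedF (s @: E)%AS) fixedFieldS // HG_conj.
  exact: bigcap_inf (HG_all s).
apply: agenv_sub_modl; first by rewrite -(fixedF 1%AS) fixedFieldS //; apply/subsetP=> x _; apply: HG_all.
exact: prodv_sub.
Qed.

Lemma gc_sub (E : {subfield Om}) : (E <= galClosure E)%VS.
Proof. by rewrite galconn HG_gc gcore_sub. Qed.

Lemma gc_galois (E : {subfield Om}) : galois 1 (galClosure E).
Proof.
have nsG : (gcore (HG E) GG <| GG)%g.
  by apply: gcore_normal; apply/subsetP=> x _; apply: HG_all.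
have e : fixedField (gcore (HG E) GG) = galClosure E by rewrite -HG_gc fixedF.
rewrite -e; exact: (@normal_fixedField_galois F Om {:Om}%AS 1%AS (galOm 1%AS) _ nsG).
Qed.

Lemma morphim_class_support (aT rT : finGroupType) (D : {group aT})
   (f : {morphism D >-> rT}) (A B : {set aT}) :
  A \subset D -> B \subset D ->
  (f @* class_support A B = class_support (f @* A) (f @* B))%g.
Proof.
move=> sAD sBD; rewrite !morphimEsub //; last first.
  by apply: class_support_sub_norm => //; apply: subset_trans sBD (normG D).
apply/setP=> y; apply/imsetP/imset2P.
  case=> x /imset2P[a b Aa Bb ->] ->.
  have Da := subsetP sAD a Aa; have Db := subsetP sBD b Bb.
  exists (f a) (f b); rewrite ?imset_f //.
  by rewrite morphJ.
case=> _ _ /imsetP[a Aa ->] /imsetP[b Bb ->] ->.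
have Da := subsetP sAD a Aa; have Db := subsetP sBD b Bb.
exists (a ^ b)%g; first exact: imset2_f.
by rewrite morphJ.
Qed.

Section Cast.
Variable E : {subfield Om}.
Local Notation Et := (galClosure E).
Let sKME : (1 <= Et <= {:Om})%VS. Proof. by rewrite sub1v subvf. Qed.
Let nKM : normalField 1 Et. Proof. by case/and3P: (gc_galois E). Qed.
Let f := @normalField_cast_morphism F Om {:Om}%AS 1%AS Et sKME nKM.

Let fG : (f @* GG)%g = 'Gal(Et / 1)%g.
Proof. exact: (@normalField_img F Om {:Om}%AS 1%AS (galOm 1%AS) Et sKME nKM). Qed.

Let sEG : (HG E \subset GG)%g.
Proof. by apply/subsetP=> x _; apply: HG_all. Qed.

Let fE : (f @* HG E)%g = 'Gal(Et / E)%g.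
Proof.
have sKME' : (E <= Et <= {:Om})%VS by rewrite gc_sub subvf.
have nKM' : normalField E Et by apply: normalFieldS nKM; apply: sub1v.
rewrite -(@normalField_img F Om {:Om}%AS E (galOm E) Et sKME' nKM') !morphimEsub //.
Qed.

Let kf : ('ker f)%g = HG Et.
Proof. exact: (@normalField_ker F Om {:Om}%AS 1%AS Et sKME nKM). Qed.

Lemma ascIndexE : ascIndex E = #|GG : <<class_support (HG E) GG>>|%g.
Proof.
rewrite /ascIndex -fG -fE -morphim_class_support // -morphim_gen; last first.
  by apply: class_support_sub_norm => //; apply: normG.
have sCG : (<<class_support (HG E) GG>> \subset GG)%g.
  by rewrite gen_subG; apply: class_support_sub_norm => //; apply: normG.
have := index_morphim_ker f sCG (subxx _).
have k1 : #|'ker_GG f : <<class_support (HG E) GG>>|%g = 1%N.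
  rewrite -indexgI (setIidPl _) ?indexgg //.
  apply: subset_trans (subsetIr _ _) _.
  apply: (@subset_trans _ _ (HG (galClosure E))); first by change (('ker f) \subset HG (galClosure E))%g; rewrite kf.
  apply: subset_trans (subset_trans (sub_class_support _ _) (subset_gen _)).
  by rewrite -galconn gc_sub.
by rewrite k1 muln1.
Qed.

Lemma clusterSizeE : clusterSize E = #|'N_GG(HG E) : HG E|%g.
Proof.
rewrite /clusterSize -fG -fE -morphim_subnormG; last 2 first.
- by rewrite /= kf -galconn gc_sub.
- exact: sEG.
have sNG : ('N_GG(HG E) \subset GG)%g by apply: subsetIl.
have sEN : (HG E \subset 'N_GG(HG E))%g by rewrite subsetI sEG normG.
have := index_morphim_ker f sEN sNG.
have k1 : #|'ker_('N_GG(HG E)) f : HG E|%g = 1%N.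
  rewrite -indexgI (setIidPl _) ?indexgg //.
  apply: subset_trans (subsetIr _ _) _.
  apply: (@subset_trans _ _ (HG (galClosure E))); first by change (('ker f) \subset HG (galClosure E))%g; rewrite kf.
  by rewrite -galconn gc_sub.
by rewrite k1 muln1.
Qed.


End Cast.

Lemma galMf (x y : gT) (a : Om) : (x * y)%g a = y (x a).
Proof. exact: (@galM F Om {:Om}%AS x y a (memvf a)). Qed.

Lemma gal_idf (a : Om) : (1%g : gT) a = a.
Proof. exact: (@gal_id F Om {:Om}%AS a). Qed.

Definition Sf (M L : {vspace Om}) := [set g : gT | (g @: L <= M)%VS].

Lemma Sf_Sg (M L : {subfield Om}) : Sf M L = Sg GG (HG M) (HG L).
Proof.
apply/setP=> g; rewrite !inE HG_all /=.
by rewrite -HG_conj -(galconn (g @: L)%AS M).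
Qed.

Lemma primEltP (L : {subfield Om}) : <<1; primElt L>>%VS = L.
Proof.
rewrite /primElt; apply: (epsilon_spec (inhabits 0) (fun a => <<1; a>>%VS = L)).
exists (separable_generator 1 L); apply/esym.
apply: eq_adjoin_separable_generator; last exact: sub1v.
exact: separableSr (subvf L) sepOm.
Qed.

Lemma memHG_prim (L : {subfield Om}) (x : gT) :
  (x \in HG L) = (x (primElt L) == primElt L).
Proof.
set a := primElt L.
have La : a \in L by rewrite -(primEltP L) memv_adjoin.
apply/idP/eqP=> [xL | xa].
  exact: (@fixed_gal F Om L {:Om}%AS x a (subvf L)).
have : (x \in 'Gal({:Om} / fixedField [set x]))%g.
  by apply: (subsetP (galois_connection_subset _)); rewrite inE.
apply: (subsetP (galS _ _)).
rewrite -(primEltP L); apply/FadjoinP; split; first exact: sub1v.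
by apply/fixedFieldP; [exact: memvf | move=> y /set1P ->].
Qed.

Lemma Sf_prim (M L : {subfield Om}) (g : gT) : (g \in Sf M L) = (g (primElt L) \in M).
Proof.
rewrite inE -{1}(primEltP L) (aimg_adjoin (gal_repr g)) aimg1.
by apply/FadjoinP/idP=> [[]//|->]; split; first exact: sub1v.
Qed.

Lemma gal_eq_prim (L : {subfield Om}) (g h : gT) :
  (h (primElt L) == g (primElt L)) = ((h * g^-1)%g \in HG L).
Proof.
rewrite memHG_prim galMf.
apply/eqP/eqP=> [-> | e].
  by rewrite -galMf mulgV gal_idf.
by rewrite -[in LHS](mulgKV g h) !galMf e.
Qed.

Lemma HSf (M L : {subfield Om}) : (HG L * Sf M L)%g = Sf M L.
Proof.
apply/eqP; rewrite eqEsubset mulg_subr ?group1 // andbT.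
apply/subsetP=> x /mulsgP[h g Hh Sg ->].
by rewrite Sf_prim galMf (eqP (etrans (esym (memHG_prim L h)) Hh)) -Sf_prim.
Qed.

Lemma rcoset_repr (H : {group gT}) (X : {set gT}) (g : gT) :
  X = (H :* g)%g -> X = (H :* repr X)%g.
Proof.
move=> ->; apply/esym/rcoset_eqP.
exact: mem_repr (rcoset_refl H g).
Qed.

Lemma rhoKE (M L : {subfield Om}) : (rhoK M L * #|HG L|)%N = #|Sf M L|.
Proof.
set a := primElt L; set S := Sf M L.
have HS : (HG L * S)%g = S := HSf M L.
have pP : partition (rcosets (HG L) S) S.
  by rewrite -{2}HS; apply: rcosets_partition_mulS.
have cS : #|S| = (#|rcosets (HG L) S| * #|HG L|)%N.
  by apply: card_uniform_partition pP => C /rcosetsP[g _ ->]; exact: card_rcoset.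
set P := rcosets (HG L) S in pP cS *.
pose rs := [seq (repr X : gT) a | X : {set gT} <- enum P].
have memP X : X \in P -> repr X \in S /\ X = (HG L :* repr X)%g.
  case/rcosetsP=> g Sg DX; split; last exact: rcoset_repr DX.
  have Xg : g \in X by rewrite DX rcoset_refl.
  have := mem_repr g Xg; rewrite {2}DX => /rcosetP[h Hh ->].
  by rewrite -HS; apply: mem_mulg.
have Urs : uniq rs.
  rewrite map_inj_in_uniq ?enum_uniq // => X Y; rewrite !mem_enum => PX PY e.
  have [_ DX] := memP X PX; have [_ DY] := memP Y PY.
  rewrite DX DY; apply/rcoset_eqP; rewrite mem_rcoset -gal_eq_prim.
  by apply/eqP.
have mem_rs x : (x \in rs) = (x \in M) && root (minPoly 1 a) x.
  apply/mapP/andP.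
    case=> X; rewrite mem_enum => PX ->; have [SX _] := memP X PX.
    split; first by rewrite -Sf_prim.
    by apply: (@root_minPoly_gal F Om 1%AS {:Om}%AS) => //; [exact: sub1v | exact: HG_all | exact: memvf].
  case=> Mx rx.
  have [g _ gx] := @normalField_root_minPoly F Om 1%AS {:Om}%AS a x (sub1v _) (normalFieldf _) (memvf a) rx.
  have Sg : g \in S by rewrite Sf_prim gx.
  have PX : (HG L :* g)%g \in P by apply/rcosetsP; exists g.
  exists (HG L :* g)%g; first by rewrite mem_enum.
  have := mem_repr g (rcoset_refl (HG L) g); case/rcosetP=> h Hh ->.
  by rewrite galMf (eqP (etrans (esym (memHG_prim L h)) Hh)).
have szrs : size rs = #|P| by rewrite size_map -cardE.
rewrite cS -szrs; congr (_ * _)%N.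
rewrite /rhoK /nrootsIn -/a.
set Q := (fun n => _).
have [rs' [Urs' szrs' mem_rs']] : Q (epsilon (inhabits 0%N) Q).
  by apply: epsilon_spec; exists (size rs), rs.
rewrite -szrs'; apply/eqP; rewrite eq_sym -(uniq_size_uniq Urs') //.
by move=> x; rewrite mem_rs mem_rs'.
Qed.



Lemma conjInP (M L : {subfield Om}) (L' : {vspace Om}) :
  conjIn M L L' <-> exists2 g, g \in Sf M L & L' = (g @: L)%VS.
Proof.
split.
  case=> _ [sL'M [f [hf eL']]].
  have [x _ fx] := @kHom_to_gal F Om 1%AS L {:Om}%AS f
     (introT andP (conj (sub1v L) (subvf L))) (normalFieldf _) hf.
  have e : (f @: L)%VS = (x @: L)%VS by apply: eq_in_limg.
  have sxM : (x @: L <= M)%VS by rewrite -e eL'.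
  exists x; last by rewrite -eL'; exact: e.
  by rewrite inE; exact: sxM.
case=> g; rewrite inE => sgM ->; split; first exact: (valP (g @: L)%AS).
split=> //; exists (gal_repr g : 'End(Om)); split=> //; exact: k1AHom.
Qed.

Definition Qg (M L : {subfield Om}) := <<\bigcup_(g in Sf M L) (HG L :^ g)>>%g.

Lemma memQ (M L : {subfield Om}) (x : Om) :
  (x \in fixedField (Qg M L)) <-> (forall L', conjIn M L L' -> x \in L').
Proof.
have e : fixedField (Qg M L) = fixedField (\bigcup_(g in Sf M L) (HG L :^ g))%g.
  rewrite /Qg -gal_generated.
  exact: (fixedF (fixedField (\bigcup_(g in Sf M L) (HG L :^ g))%g)).
rewrite e; split.
  move=> xQ L' /conjInP[g Sg ->].
  rewrite -(fixedF (g @: L)%AS); apply/fixedFieldP; first exact: memvf.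
  move=> y; rewrite /= HG_conj => yL.
  have [_] := mem_fixedFieldP xQ; apply.
  by apply/bigcupP; exists g.
move=> h; apply/fixedFieldP; first exact: memvf.
move=> y /bigcupP[g Sg]; rewrite -HG_conj => yg.
have := h (g @: L)%VS (proj2 (conjInP _ _ _) (ex_intro2 _ _ g Sg erefl)).
rewrite -(fixedF (g @: L)%AS) => /mem_fixedFieldP[_]; apply.
exact: yg.
Qed.

Lemma tauKE (M L : {subfield Om}) :
  tauK M L = if Sf M L == set0 then 0%N else #|GG : Qg M L|%g.
Proof.
rewrite /tauK.
set P := (fun n => _).
have [n Pn] : exists n, P n.
  case: (boolP (Sf M L == set0)) => [/eqP S0 | /set0Pn[g Sg]].
    exists 0%N; left; split=> // L' /conjInP[g]; by rewrite S0 inE.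
  exists (\dim (fixedField (Qg M L))); right; split.
    by exists (g @: L)%VS; apply/conjInP; exists g.
  by exists (fixedField (Qg M L)); split=> // x; apply: memQ.
have := epsilon_spec (inhabits 0%N) P (ex_intro _ n Pn).
set m := epsilon _ _.
case=> [[noC ->] | [[L' cL'] [D [memD ->]]]].
  case: eqP => // /eqP /set0Pn[g Sg].
  by case: (noC (g @: L)%VS); apply/conjInP; exists g.
have -> : Sf M L == set0 = false.
  by apply/negbTE/set0Pn; case/conjInP: cL' => g Sg _; exists g.
have -> : D = fixedField (Qg M L).
  by apply/vspaceP=> x; apply/idP/idP; [move/memD/memQ | move/memQ/memD].
rewrite (dimHG (fixedField (Qg M L))).
by rewrite (gal_fixedField (Qg M L)).
Qed.

Theorem main_sep (L M J : {subfield Om}) :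
  (L <= M)%VS ->
  (galClosure M :&: galClosure J)%VS = 1%VS ->
  [/\ \dim (L * J)%AS = (\dim L * \dim J)%N,
      ascIndex (L * J)%AS = (ascIndex L * ascIndex J)%N,
      rhoK (M * J)%AS (L * J)%AS = (clusterSize J * rhoK M L)%N
    & tauK (M * J)%AS (L * J)%AS = (\dim J * tauK M L)%N].
Proof.
move=> sLM hMJ.
set A := HG (galClosure M); set B := HG (galClosure J).
have subG (X : {set gT}) : (X \subset GG)%g by apply/subsetP=> x _; apply: HG_all.
have nsAG : (A <| GG)%g by rewrite /A HG_gc; apply: gcore_normal.
have nsBG : (B <| GG)%g by rewrite /B HG_gc; apply: gcore_normal.
have eAB : (A * B)%g = GG.
  rewrite -norm_joinEr; last exact: subset_trans (subG _) (normal_norm nsAG).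
  apply/eqP; rewrite eqEsubset subG /=.
  rewrite -(gal_fixedField (A <*> B)%G).
  apply: galS.
  have h1 : (fixedField (A <*> B)%G <= galClosure M :&: galClosure J)%VS.
    rewrite subv_cap; apply/andP; split.
      by rewrite -(fixedF (galClosure M)) fixedFieldS // joing_subl.
    by rewrite -(fixedF (galClosure J)) fixedFieldS // joing_subr.
  by move: h1; rewrite hMJ => h1; exact: h1.
set HL := HG L; set HM := HG M; set HJ := HG J.
have sAM : (A \subset HM)%g by rewrite -galconn gc_sub.
have sAL : (A \subset HL)%g by rewrite -galconn (subv_trans sLM (gc_sub M)).
have sBJ : (B \subset HJ)%g by rewrite -galconn gc_sub.
have GL := GL1 eAB.
split.
- by rewrite !dimHG HG_prod GL.
- rewrite !ascIndexE HG_prod.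
  have := GT nsAG nsBG eAB sAL sBJ (subG _) (subG _); rewrite /ncl => ->.
  rewrite GL //.
    exact: subset_trans sAL (subset_trans (sub_class_support _ _) (subset_gen _)).
  exact: subset_trans sBJ (subset_trans (sub_class_support _ _) (subset_gen _)).
- have HS : forall h g, h \in HL -> g \in Sf M L -> (h * g)%g \in Sf M L.
    by move=> h g Hh Sg; rewrite -HSf; apply: mem_mulg.
  set N := 'N_GG(HJ)%G.
  have sBN : (B \subset N)%g by rewrite subsetI subG /= (subset_trans sBJ (normG _)).
  have eS : Sf (M * J)%AS (L * J)%AS = Sf M L :&: N.
    rewrite !Sf_Sg !HG_prod.
    exact: (Sg_I nsAG nsBG eAB sAM (subG _) sAL sBJ (subG _)).
  have r1 := rhoKE (M * J)%AS (L * J)%AS.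
  rewrite HG_prod eS in r1.
  have r2 := rhoKE M L.
  have r3 := GR nsAG eAB sAL (subG _) (subG (Sf M L)) HS sBN (subG _).
  have r4 : (#|HJ| * clusterSize J)%N = #|N|.
    by rewrite clusterSizeE Lagrange // subsetI subG normG.
  have eXY : (HL * HJ)%g = GG.
    apply/eqP; rewrite eqEsubset subG /= -{1}eAB mulgSS //.
  have r5 := mul_cardG HL HJ; rewrite eXY in r5.
  apply/eqP; rewrite -(eqn_pmul2r (cardG_gt0 (HL :&: HJ)%G)) -(eqn_pmul2r (cardG_gt0 GG)).
  apply/eqP; rewrite r1 r3 -r2 -r4.
  transitivity (rhoK M L * clusterSize J * (#|HL| * #|HJ|))%N; first ring.
  rewrite r5; ring.
have HS : forall h g, h \in HL -> g \in Sf M L -> (h * g)%g \in Sf M L.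
  by move=> h g Hh Sg; rewrite -HSf; apply: mem_mulg.
set N := 'N_GG(HJ)%G.
have sBN : (B \subset N)%g by rewrite subsetI subG /= (subset_trans sBJ (normG _)).
have eS : Sf (M * J)%AS (L * J)%AS = Sf M L :&: N.
  rewrite !Sf_Sg !HG_prod.
  exact: (Sg_I nsAG nsBG eAB sAM (subG _) sAL sBJ (subG _)).
have eQ : Qg (M * J)%AS (L * J)%AS = (Qg M L :&: HJ)%g.
  rewrite /Qg eS HG_prod.
  exact: (GTau nsAG nsBG eAB sAL (subG _) sBJ (subG _) (subG _) HS).
rewrite !tauKE eQ eS.
have r3 := GR nsAG eAB sAL (subG _) (subG (Sf M L)) HS sBN (subG _).
case: (boolP (Sf M L == set0)) => [/eqP S0 | /set0Pn[g0 Sg0]].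
  by rewrite S0 set0I eqxx muln0.
have -> : (Sf M L :&: N == set0) = false.
  apply/negbTE/set0Pn; apply/card_gt0P.
  rewrite -(ltn_pmul2r (cardG_gt0 GG)) r3 mul0n muln_gt0 cardG_gt0 andbT.
  by apply/card_gt0P; exists g0.
rewrite mulnC dimHG; apply: (GL1 eAB) => //; try exact: subG.
change (A \subset Qg M L)%g.
apply: (@subset_trans _ _ (HL :^ g0)%g).
  by rewrite -(normP (subsetP (normal_norm nsAG) g0 (HG_all g0))) conjSg.
apply: subset_trans (subset_gen _).
exact: (bigcup_sup g0 Sg0).
Qed.

End FieldPart.

Unset Implicit Arguments.

(* K = F (perfect); all fields live in Om, a finite normal extension of K.
   Degrees over K are dimensions over F (since K = 1). *)
Theorem mainTheorem17 (F : fieldType) (Om : splittingFieldType F)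
    (L M J : {subfield Om}) :
  perfect_field F ->
  (L <= M)%VS ->
  (galClosure M :&: galClosure J)%VS = 1%VS ->
  [/\ \dim (L * J)%AS = (\dim L * \dim J)%N,
      ascIndex (L * J)%AS = (ascIndex L * ascIndex J)%N,
      rhoK (M * J)%AS (L * J)%AS = (clusterSize J * rhoK M L)%N
    & tauK (M * J)%AS (L * J)%AS = (\dim J * tauK M L)%N].
Proof.
move=> pF; exact: (main_sep (perfect_sep Om pF)).
Qed.
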